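(* Let $A$ be a finite set of alternatives with $|A|\ge 3$ and let $\mathbb{D}$ be a minimally rich domain of linear orders over $A$ that is connected with two distinct neighbours. If $f:\mathbb{D}^2\to A$ (two voters) is unanimous and strategy-proof, then $f$ satisfies dictatorship.
   Context: A domain is a set $\mathbb{D}$ of linear orders (strict preferences) over $A$; a profile for voters $\{1,2\}$ is $(P_1,P_2)\in\mathbb{D}^2$. For a linear order $P_i$, $r_k(P_i)$ is its $k$-th ranked alternative. $\mathbb{D}$ is minimally rich if every $a\in A$ is ranked first in some $P_i\in\mathbb{D}$. Two linear orders $P_i,P_i'$ are adjacent if $P_i'$ is obtained from $P_i$ by swapping two consecutively ranked alternatives and leaving all other ranks unchanged. A social choice function $f:\mathbb{D}^2\to A$ is unanimous if $f(P)=a$ whenever both voters rank $a$ first; strategy-proof if there is no voter $i$, profile $P$ and $P_i'\in\mathbb{D}$ with $f(P_i',P_{-i})\,P_i\,f(P_i,P_{-i})$; and satisfies dictatorship if there is a voter $i$ with $f(P)=r_1(P_i)$ for all $P\in\mathbb{D}^2$. A path in $\mathbb{D}$ is a sequence of distinct preferences in $\mathbb{D}$ in which consecutive ones are adjacent; $\mathbb{D}$ is connected if any two of its preferences are joined by a path in $\mathbb{D}$. For $\bar{\mathbb{D}}\subseteq\mathbb{D}$, a neighbour of $\bar{\mathbb{D}}$ in $\mathbb{D}$ is a $P_i\in\mathbb{D}\setminus\bar{\mathbb{D}}$ adjacent to some element of $\bar{\mathbb{D}}$. Two preferences $P_i,P_i'\in\mathbb{D}$ are top-connected in $\mathbb{D}$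 if there is a path from $P_i$ to $P_i'$ in $\mathbb{D}$ all of whose members have the same top-ranked alternative. The top-connected closure $\mathbb{D}^{TCC}(P_i)$ is the set of preferences in $\mathbb{D}$ top-connected to $P_i$, together with $P_i$. $\mathbb{D}$ is connected with two distinct neighbours if (1) $\mathbb{D}$ is connected, and (2) for every $P_i\in\mathbb{D}$ there exist two neighbours $P_i',P_i''$ of $\mathbb{D}^{TCC}(P_i)$ in $\mathbb{D}$ with $r_1(P_i')\ne r_1(P_i'')$. *)

(* Defs.v *)
From mathcomp Require Import all_boot.
Set Implicit Arguments. Unset Strict Implicit. Unset Printing Implicit Defensive.

(* A linear order (strict preference) over the finite set A, represented by
   its ranking: r k = the (k+1)-th ranked alternative, k : 'I_m with
   m := #|A|.-1.+1 (= #|A| whenever A is nonempty; written this way so that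
   the first rank ord0 exists), required to be injective, hence (for A
   nonempty) a bijection onto A. *)
Section Prefs.
Variable A : finType.

Definition pref := {r : {ffun 'I_(#|A|.-1.+1) -> A} | injectiveb r}.

Definition rk (P : pref) (k : 'I_(#|A|.-1.+1)) : A := (val P) k.

Definition rank_of (P : pref) (a : A) : nat := index a (codom (val P)).

Definition prefers (P : pref) (a b : A) : bool := rank_of P a < rank_of P b.

Definition top (P : pref) : A := rk P ord0.

Definition minimally_rich (D : {set pref}) : Prop :=
  forall a : A, exists2 P, P \in D & top P = a.

Definition adjacent (P P' : pref) : Prop :=
  exists (k k' : 'I_(#|A|.-1.+1)), [/\ val k' = (val k).+1,
    rk P' k = rk P k', rk P' k' = rk P k &
    forall j, j != k -> j != k' -> rk P' j = rk P j].

Fixpoint adj_chain (x : pref) (s : seq pref) : Prop :=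
  match s with
  | [::] => True
  | y :: s' => adjacent x y /\ adj_chain y s'
  end.

Definition path_in (D : {set pref}) (p : seq pref) : Prop :=
  match p with
  | [::] => False
  | x :: s => [/\ uniq p, all (fun q => q \in D) p & adj_chain x s]
  end.

Definition joined (D : {set pref}) (P P' : pref) : Prop :=
  exists p, [/\ path_in D p, head P p = P & last P p = P'].

Definition connected_dom (D : {set pref}) : Prop :=
  forall P P', P \in D -> P' \in D -> joined D P P'.

Definition top_connected (D : {set pref}) (P P' : pref) : Prop :=
  exists p, [/\ path_in D p, head P p = P, last P p = P' &
                all (fun q => top q == top P) p].

Definition in_TCC (D : {set pref}) (P P' : pref) : Prop :=
  P' = P \/ (P' \in D /\ top_connected D P P').

Definition neighbour (D : {set pref}) (S : pref -> Prop) (P : pref) : Prop :=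
  [/\ P \in D, ~ S P & exists2 Q, S Q & adjacent Q P].

Definition connected_two_neighbours (D : {set pref}) : Prop :=
  connected_dom D /\
  forall P, P \in D -> exists P' P'',
    [/\ neighbour D (in_TCC D P) P', neighbour D (in_TCC D P) P'' & top P' != top P''].

Definition unanimous (D : {set pref}) (f : pref -> pref -> A) : Prop :=
  forall P1 P2 a, P1 \in D -> P2 \in D -> top P1 = a -> top P2 = a -> f P1 P2 = a.

Definition strategy_proof (D : {set pref}) (f : pref -> pref -> A) : Prop :=
  (forall P1 P2 P1', P1 \in D -> P2 \in D -> P1' \in D ->
      ~~ prefers P1 (f P1' P2) (f P1 P2)) /\
  (forall P1 P2 P2', P1 \in D -> P2 \in D -> P2' \in D ->
      ~~ prefers P2 (f P1 P2') (f P1 P2)).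

Definition dictatorship (D : {set pref}) (f : pref -> pref -> A) : Prop :=
  (forall P1 P2, P1 \in D -> P2 \in D -> f P1 P2 = top P1) \/
  (forall P1 P2, P1 \in D -> P2 \in D -> f P1 P2 = top P2).

End Prefs.

(* Main.v *)
Require Import Defs.
From mathcomp Require Import all_boot.
Set Implicit Arguments. Unset Strict Implicit. Unset Printing Implicit Defensive.

Section Basic.
Variable A : finType.
Hypothesis HA : 2 < #|A|.
Local Notation n := (#|A|.-1.+1).

Lemma n_eq : n = #|A|.
Proof. by rewrite prednK //; apply: leq_trans HA. Qed.

Lemma n_gt1 : 1 < n.
Proof. by rewrite n_eq; apply: ltn_trans HA. Qed.

Definition o1 : 'I_n := Ordinal n_gt1.
Definition second (P : pref A) : A := rk P o1.

Lemma rk_inj (P : pref A) : injective (rk P).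
Proof. by move=> i j; rewrite /rk; move/injectiveP: (valP P); apply. Qed.

Lemma rank_rk (P : pref A) i : rank_of P (rk P i) = i.
Proof.
by rewrite /rank_of /rk codomE (index_map (@rk_inj P)) index_enum_ord.
Qed.

Lemma rk_surj (P : pref A) a : exists i, rk P i = a.
Proof.
have : a \in codom (val P).
  apply: inj_card_onto; first by move/injectiveP: (valP P).
  by rewrite card_ord n_eq.
by case/codomP => i ->; exists i.
Qed.

Lemma prefers_rk (P : pref A) i j : prefers P (rk P i) (rk P j) = (i < j).
Proof. by rewrite /prefers !rank_rk. Qed.

Lemma top_best (P : pref A) z : z != top P -> prefers P (top P) z.
Proof.
case: (rk_surj P z) => i <-; rewrite /top prefers_rk => ne.
rewrite lt0n; apply/eqP => i0; move: ne; suff -> : i = ord0 by rewrite eqxx.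
by apply: val_inj.
Qed.

Lemma top_bestN (P : pref A) z : ~~ prefers P (top P) z -> z = top P.
Proof. by move=> h; apply/eqP; apply: contraNT h; apply: top_best. Qed.

Lemma sec_best (P : pref A) z : z != top P -> z != second P -> prefers P (second P) z.
Proof.
case: (rk_surj P z) => i <-; rewrite /top /second prefers_rk => n0 n1 /=.
have h0 : val i != 0 by apply: contra n0 => /eqP h; apply/eqP; congr rk; apply: val_inj.
have h1 : val i != 1 by apply: contra n1 => /eqP h; apply/eqP; congr rk; apply: val_inj.
by move: h0 h1; clear n0 n1; case: i => [[|[|m]] ?].
Qed.

Lemma pref_total (P : pref A) x y : x != y -> ~~ prefers P x y -> prefers P y x.
Proof.
case: (rk_surj P x) => i <-; case: (rk_surj P y) => j <-; rewrite !prefers_rk => ne.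
rewrite -leqNgt leq_eqVlt => /orP [/eqP e|//].
by move: ne; rewrite (_ : j = i) ?eqxx //; apply: val_inj.
Qed.

Lemma pref_asym (P : pref A) x y : prefers P x y -> ~~ prefers P y x.
Proof. by rewrite /prefers => h; rewrite -leqNgt ltnW. Qed.

Lemma adjacent_sym (P P' : pref A) : adjacent P P' -> adjacent P' P.
Proof.
case=> k [k'] [e1 e2 e3 e4]; exists k, k'; split => //.
by move=> j jk jk'; rewrite e4.
Qed.

Lemma adj_top (P P' : pref A) : adjacent P P' -> top P != top P' ->
  [/\ top P' = second P, second P' = top P &
      forall j, j != ord0 -> j != o1 -> rk P' j = rk P j].
Proof.
case=> k [k'] [e1 e2 e3 e4] ne.
have k0 : k = ord0.
  apply: val_inj => /=; apply/eqP; apply: contraNT ne => kn0.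
  rewrite /top e4 //; first by apply: contraNneq kn0 => <-.
  by apply/eqP => /(congr1 val) /=; rewrite e1.
have k1 : k' = o1 by apply: val_inj; rewrite e1 k0.
subst; split => //.
Qed.

Lemma adj_agree (P P' : pref A) z w : adjacent P P' -> top P != top P' ->
  z != top P -> z != second P -> w != top P -> w != second P ->
  prefers P' z w = prefers P z w.
Proof.
move=> adj ne; case: (adj_top adj ne) => _ _ e.
case: (rk_surj P z) => i <-; case: (rk_surj P w) => j <-.
rewrite /top /second => i0 i1 j0 j1.
have i0' : i != ord0 by apply: contraNneq i0 => ->.
have i1' : i != o1 by apply: contraNneq i1 => ->.
have j0' : j != ord0 by apply: contraNneq j0 => ->.
have j1' : j != o1 by apply: contraNneq j1 => ->.
by rewrite -{1}(e i i0' i1') -{1}(e j j0' j1') !prefers_rk.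
Qed.

End Basic.

Section SCF.
Variable A : finType.
Hypothesis HA : 2 < #|A|.
Variable D : {set pref A}.
Variable f : pref A -> pref A -> A.
Hypothesis Hun : unanimous D f.
Hypothesis Hsp : strategy_proof D f.

Let SP1 := Hsp.1.
Let SP2 := Hsp.2.

Lemma win1 P1 X P2 : P1 \in D -> X \in D -> P2 \in D -> top X = top P1 ->
  f X P2 = top P1 -> f P1 P2 = top P1.
Proof.
move=> h1 hX h2 e fe; apply: (top_bestN HA); rewrite -fe; exact: SP1.
Qed.

Lemma second_opt P1 X P2 : P1 \in D -> X \in D -> P2 \in D ->
  f X P2 = second HA P1 -> f P1 P2 = top P1 \/ f P1 P2 = second HA P1.
Proof.
move=> h1 hX h2 fe.
case: (eqVneq (f P1 P2) (top P1)) => [|n0]; first by left.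
case: (eqVneq (f P1 P2) (second HA P1)) => [|n1]; first by right.
by move: (SP1 h1 h2 hX); rewrite fe (sec_best n0 n1).
Qed.

Lemma edge_out X X' : X \in D -> X' \in D -> adjacent X X' -> top X != top X' ->
  f X X' = top X \/ f X X' = top X'.
Proof.
move=> hX hX' adj ne; case: (adj_top HA adj ne) => e1 _ _.
rewrite e1; apply: (second_opt hX hX' hX').
by rewrite -e1; apply: Hun.
Qed.

Lemma E1 X X' X1 Y1 : X \in D -> X' \in D -> adjacent X X' -> top X != top X' ->
  f X X' = top X -> X1 \in D -> Y1 \in D -> top X1 = top X -> top Y1 = top X' ->
  f X1 Y1 = top X.
Proof.
move=> hX hX' adj ne fe h1 h2 t1 t2.
case: (adj_top HA adj ne) => e1 _ _.
have fXY : f X Y1 = top X.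
  have u : f X' Y1 = second HA X by rewrite -e1; apply: Hun.
  case: (@second_opt X X' Y1 hX hX' h2 u) => [//|fy].
  move: (SP2 hX hX' h2); rewrite fy fe -e1 top_best //; by rewrite eq_sym.
by rewrite -t1; apply: (win1 h1 hX h2); rewrite t1.
Qed.

Lemma boundary X X' P2 Y1 : X \in D -> X' \in D -> adjacent X X' -> top X != top X' ->
  f X X' = top X -> P2 \in D -> Y1 \in D -> f Y1 P2 = top X' -> f X P2 = top X.
Proof.
move=> hX hX' adj ne fe h2 hY fy.
case: (adj_top HA adj ne) => e1 _ _.
have u : f Y1 P2 = second HA X by rewrite fy e1.
case: (@second_opt X Y1 P2 hX hY h2 u) => [//|fs].
move: (SP2 hX hX' h2); rewrite fs fe -e1 top_best //; by rewrite eq_sym.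
Qed.

End SCF.

Lemma unan_T (A : finType) (D : {set pref A}) f :
  unanimous D f -> unanimous D (fun P1 P2 => f P2 P1).
Proof. by move=> h P1 P2 a h1 h2 e1 e2; apply: h. Qed.

Lemma sp_T (A : finType) (D : {set pref A}) f :
  strategy_proof D f -> strategy_proof D (fun P1 P2 => f P2 P1).
Proof. by case=> h1 h2; split => P1 P2 P' a b c; [apply: h2 | apply: h1]. Qed.

Lemma snake (A : finType) (HA : 2 < #|A|) (D : {set pref A}) f
  (Hun : unanimous D f) (Hsp : strategy_proof D f) Q Q' T' T :
  Q \in D -> Q' \in D -> T' \in D -> T \in D ->
  adjacent Q Q' -> top Q != top Q' -> f Q Q' = top Q ->
  adjacent T' T -> top T' != top T -> top T' = top Q' -> top T != top Q ->
  f T' T = top T'.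
Proof.
move=> hQ hQ' hT' hT aQ nQ fQ aT nT eT nTQ.
case: (adj_top HA aQ nQ) => eQ1 eQ2 _.
case: (adj_top HA aT nT) => eT1 eT2 _.
have fQT' : f Q T' = top Q by apply: (E1 HA Hun Hsp hQ hQ' aQ nQ fQ).
case: (edge_out HA Hun Hsp hT' hT aT nT) => [//|fb]; exfalso.
have nT' : top T != top T' by rewrite eq_sym.
have fQ'T : f Q' T = top T.
  have := @E1 A HA D (fun P1 P2 => f P2 P1) (unan_T Hun) (sp_T Hsp) T T' T Q' hT hT'
    (adjacent_sym aT) nT' fb hT hQ' erefl.
  by apply; rewrite eT.
set w := f Q T.
have c1 : ~~ prefers Q (top T) w by rewrite -fQ'T; apply: Hsp.1.
have c2 : ~~ prefers Q' w (top T) by rewrite -fQ'T /w; apply: Hsp.1.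
have c3 : ~~ prefers T' w (top Q) by rewrite -fQT' /w; apply: Hsp.2.
have ncQ : top Q' != top T by rewrite -eT.
case: (eqVneq w (top T)) => [wb|wnb].
  move: c3; rewrite wb eT1 sec_best //.
    by rewrite eT.
  by rewrite -eT1 eq_sym.
case: (eqVneq w (top Q)) => [wa|wna].
  move: c2; rewrite wa -eQ2 sec_best //; first by rewrite eq_sym.
  by rewrite eQ2.
case: (eqVneq w (top Q')) => [wc|wnc].
  by move: c2; rewrite wc top_best // eq_sym.
have hag : prefers Q' w (top T) = prefers Q w (top T).
  apply: (@adj_agree A HA Q Q' w (top T) aQ nQ).
  all: try by [].
  all: try by rewrite -eQ1.
  all: try by rewrite eq_sym.
  all: try by rewrite -eQ1 eq_sym.
move: c2; rewrite hag => c2.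
by move: (pref_total HA wnb c2) c1 => ->.
Qed.

Section Graph.
Variable T : finType.
Variable E : rel T.
Hypothesis Esym : forall x y, E x y -> E y x.
Hypothesis Econn : forall a b, connect E a b.
Hypothesis Edeg : forall a, exists c1 c2, [/\ c1 != c2, E a c1 & E a c2].

Definition nbstep : rel (T * T) :=
  fun e e' => [&& e.2 == e'.1, E e'.1 e'.2 & e'.2 != e.1].

Lemma reach_ind (e0 : T * T) (P : T * T -> Prop) : P e0 ->
  (forall e e', connect nbstep e0 e -> P e -> nbstep e e' -> P e') ->
  forall e, connect nbstep e0 e -> P e.
Proof.
move=> P0 Hs e /connectP [p pth ->].
suff H : forall x, connect nbstep e0 x -> P x -> path nbstep x p -> P (last x p).
  by apply: H => //; exact: connect0.
elim: p {pth} => [|y p IH] x cx Px //= /andP [sxy pth'].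
apply: IH pth'; first exact: connect_trans cx (connect1 sxy).
exact: Hs cx Px sxy.
Qed.

Lemma reach_tail e0 e : connect nbstep e0 e ->
  e = e0 \/ exists e', connect nbstep e0 e' /\ nbstep e' e.
Proof.
apply: (@reach_ind e0 (fun e => e = e0 \/ exists e', connect nbstep e0 e' /\ nbstep e' e)); first by left.
by move=> e1 e' c1 _ s; right; exists e1.
Qed.

Lemma reach_edge e0 e : E e0.1 e0.2 -> connect nbstep e0 e -> E e.1 e.2.
Proof.
move=> h; apply: (@reach_ind e0 (fun e => E e.1 e.2)) => // e1 e' _ _ /and3P [_ ? _] //.
Qed.

Lemma nb_reach e0 : E e0.1 e0.2 -> forall b, exists e, connect nbstep e0 e /\ e.2 = b.
Proof.
case: e0 => u v /= Euv.
pose R := fun e => connect nbstep (u, v) e.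
pose X := fun x => [exists w, R (w, x)].
have Redge : forall e, R e -> E e.1 e.2 by move=> e; apply: reach_edge.
have Rstep : forall e e', R e -> nbstep e e' -> R e'.
  by move=> e e' c s; apply: connect_trans c (connect1 s).
have Xu : X u.
  apply: contraT => nX.
  pose inD := fun x => \sum_(w : T) (R (w, x) : nat).
  pose outD := fun x => \sum_(z : T) (R (x, z) : nat).
  have Heq : \sum_(x : T) inD x = \sum_(x : T) outD x.
    by rewrite /inD /outD exchange_big.
  have Hle : forall x, inD x <= outD x.
    move=> x.
    case: (boolP [exists w1, exists w2, [&& w1 != w2, R (w1, x) & R (w2, x)]]).
      case/existsP => w1 /existsP [w2] /and3P [n12 r1 r2].
      apply: leq_sum => w _.
      case Rw : (R (w, x)) => //=.
      have Exw : E x w by apply: Esym; exact: (Redge (w, x) Rw).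
      case: (eqVneq w w1) => [ew|nw1].
        rewrite ew in Exw *.
        have -> // : R (x, w1).
        by apply: (Rstep (w2, x)) => //; rewrite /nbstep /= eqxx Exw n12.
      have -> // : R (x, w).
      by apply: (Rstep (w1, x)) => //; rewrite /nbstep /= eqxx Exw nw1.
    move=> none.
    case: (boolP [exists w, R (w, x)]).
      case/existsP => w0 r0.
      have -> : inD x = 1.
        rewrite /inD (bigD1 w0) //= r0 big1 // => w nw.
        case Rw : (R (w, x)) => //.
        by move/negP: none; case; apply/existsP; exists w; apply/existsP; exists w0;
          rewrite nw Rw r0.
      case: (Edeg x) => c1 [c2] [n12 e1 e2].
      have [z [zn Exz]] : exists z, z != w0 /\ E x z.
        case: (eqVneq c1 w0) => [ec|nc]; last by exists c1.
        by exists c2; split => //; rewrite -ec eq_sym.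
      have Rz : R (x, z).
        by apply: (Rstep (w0, x)) => //; rewrite /nbstep /= eqxx Exz zn.
      by rewrite /outD (bigD1 z) //= Rz.
    move=> nin.
    have -> : inD x = 0.
      rewrite /inD big1 // => w _; case Rw : (R (w, x)) => //.
      by move/negP: nin; case; apply/existsP; exists w.
    by [].
  have Hlt : inD u < outD u.
    have -> : inD u = 0.
      rewrite /inD big1 // => w _; case Rw : (R (w, u)) => //.
      by move/negP: nX; case; apply/existsP; exists w.
    by rewrite /outD (bigD1 v) //= (_ : R (u, v)) //; exact: connect0.
  have : \sum_(x : T) inD x < \sum_(x : T) outD x.
    rewrite (bigD1 u) //= [X in _ < X](bigD1 u) //= -addSn.
    apply: leq_add => //; apply: leq_sum => x _; exact: Hle.
  by rewrite Heq ltnn.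
have Xclos : forall x y, X x -> E x y -> X y.
  move=> x y /existsP [w Rw] Exy.
  case: (eqVneq y w) => [eyw|nyw].
    rewrite eyw in Exy *.
    case: (reach_tail Rw) => [[-> _] //|[e' [c' s']]].
    apply/existsP; exists e'.1.
    move: s' => /and3P [/eqP /= e2 _ _].
    by rewrite -e2 -surjective_pairing.
  apply/existsP; exists x; apply: (Rstep (w, x)) => //.
  by rewrite /nbstep /= eqxx Exy nyw.
have Xv : X v by apply/existsP; exists u; exact: connect0.
move=> b.
have Xb : X b.
  have gen : forall p x, X x -> path E x p -> X (last x p).
    elim=> [|y p IH] x Xx //= /andP [exy pth].
    exact: IH (Xclos _ _ Xx exy) pth.
  case/connectP: (Econn v b) => p pth ->.
  exact: gen.
by case/existsP: Xb => w Rw; exists (w, b).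
Qed.

End Graph.

Section DGraph.
Variable A : finType.
Variable D : {set pref A}.

Definition adjb (P P' : pref A) : bool :=
  [exists k, exists k' : 'I_(#|A|.-1.+1), [&& val k' == (val k).+1, rk P' k == rk P k',
     rk P' k' == rk P k & [forall j, (j != k) ==> (j != k') ==> (rk P' j == rk P j)]]].

Lemma adjP P P' : reflect (adjacent P P') (adjb P P').
Proof.
apply: (iffP idP).
  case/existsP => k /existsP [k'] /and4P [/eqP e1 /eqP e2 /eqP e3 /forallP e4].
  exists k, k'; split => // j jk jk'.
  by move: (e4 j); rewrite jk jk' /= => /eqP.
case=> k [k'] [e1 e2 e3 e4]; apply/existsP; exists k; apply/existsP; exists k'.
rewrite e1 e2 e3 !eqxx /=; apply/forallP => j; apply/implyP => jk; apply/implyP => jk'.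
by rewrite e4.
Qed.

Definition Edgeb (x y : A) : bool :=
  (x != y) && [exists X, exists X', [&& X \in D, X' \in D, adjb X X', top X == x & top X' == y]].

Lemma EdgeP x y : reflect (x != y /\ exists X X', [/\ X \in D, X' \in D, adjacent X X', top X = x & top X' = y])
  (Edgeb x y).
Proof.
apply: (iffP andP).
  case=> ne /existsP [X] /existsP [X'] /and5P [h1 h2 h3 /eqP h4 /eqP h5].
  split => //; exists X, X'; split => //.
  by apply/adjP.
case=> ne [X [X' [h1 h2 h3 h4 h5]]]; split => //.
apply/existsP; exists X; apply/existsP; exists X'.
have h3' : adjb X X' by apply/adjP.
by rewrite h1 h2 h3' h4 h5 !eqxx.
Qed.

Lemma Edge_sym x y : Edgeb x y -> Edgeb y x.
Proof.
case/EdgeP => ne [X [X' [h1 h2 h3 h4 h5]]]; apply/EdgeP; split; first by rewrite eq_sym.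
by exists X', X; split => //; apply: adjacent_sym.
Qed.

Lemma adj_chain_connect s x : all (fun q => q \in D) (x :: s) -> adj_chain x s ->
  connect Edgeb (top x) (top (last x s)).
Proof.
elim: s x => [|y s IH] x /=; first by move=> _ _; exact: connect0.
case/and3P => hx hy hs [axy ch].
have IH' := IH y; rewrite /= hy hs in IH'; have := IH' erefl ch => c.
case: (eqVneq (top x) (top y)) => [->//|ne].
apply: connect_trans c; apply: connect1; apply/EdgeP; split => //.
by exists x, y.
Qed.

Lemma Econn : minimally_rich D -> connected_dom D -> forall a b, connect Edgeb a b.
Proof.
move=> mr cd a b.
case: (mr a) => X hX <-; case: (mr b) => Y hY <-.
case: (cd X Y hX hY) => p [].
case: p => [//|x s] [_ hall ch] /= hx hl; subst x.
rewrite -hl; exact: adj_chain_connect.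
Qed.

Lemma adj_chain_rcons (x : pref A) s y : adj_chain x s -> adjacent (last x s) y -> adj_chain x (rcons s y).
Proof. by elim: s x => [|z s IH] x /=; [move=> _ h | case=> h1 h2 h3; split => //; apply: IH]. Qed.

Lemma adj_chain_catl (x : pref A) s1 s2 : adj_chain x (s1 ++ s2) -> adj_chain x s1.
Proof. by elim: s1 x => [|z s IH] x //= [h1 h2]; split => //; apply: IH h2. Qed.

Lemma split_at (x y : pref A) s : y \in x :: s -> exists s1 s2, s = s1 ++ s2 /\ last x s1 = y.
Proof.
elim: s x => [|z s IH] x.
  by rewrite mem_seq1 => /eqP ->; exists [::], [::].
rewrite in_cons => /orP [/eqP ->|]; first by exists [::], (z :: s).
case/IH => s1 [s2 [-> e]]; by exists (z :: s1), s2.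
Qed.

Lemma tcc_top P Q : P \in D -> in_TCC D P Q -> Q \in D /\ top Q = top P.
Proof.
move=> hP [->//|[hQ [p [pin hd lst alltop]]]]; split => //.
case: p pin hd lst alltop => [//|x s] _ /= _ lst al.
have hm : Q \in x :: s by rewrite -lst mem_last.
have al' : all (fun q => top q == top P) (x :: s) by [].
have := (elimT allP al') Q hm.
by move/eqP.
Qed.

Lemma tcc_ext P Q P' : P \in D -> in_TCC D P Q -> P' \in D -> adjacent Q P' ->
  top P' = top P -> in_TCC D P P'.
Proof.
move=> hP tq hP' aQ et.
case: (eqVneq P' P) => [->|nPP]; first by left.
right; split => //.
case: tq => [eQ|[hQ [p [pin hd lst alltop]]]].
  subst Q; exists [:: P; P']; split => //=.
    by split => //; rewrite ?inE ?hP ?hP' ?andbT // eq_sym.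
  by rewrite eqxx et eqxx.
case: p pin hd lst alltop => [//|x s] [u al ch] /= hx lst alltop; subst x.
case: (boolP (P' \in P :: s)) => [inP|ninP].
  case: (split_at inP) => s1 [s2 [es ls]]; subst s.
  exists (P :: s1); split.
  - split.
    + by move: u; rewrite -cat_cons cat_uniq => /andP [].
    + by move: al; rewrite -cat_cons all_cat => /andP [].
    + exact: adj_chain_catl ch.
  - by [].
  - by rewrite /= ls.
  - move: alltop => /andP [_]; rewrite all_cat => /andP [h _].
    by rewrite /= eqxx h.
exists (rcons (P :: s) P'); split.
- split.
  + by rewrite rcons_uniq ninP u.
  + by rewrite all_rcons hP' al.
  + by apply: adj_chain_rcons => //; rewrite lst.
- by [].
- by rewrite last_rcons.
- move: alltop => /andP [_ h].
  by rewrite all_rcons /= et !eqxx h.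
Qed.

Lemma Edeg : minimally_rich D -> connected_two_neighbours D ->
  forall a, exists c1 c2, [/\ c1 != c2, Edgeb a c1 & Edgeb a c2].
Proof.
move=> mr [_ tn] a.
case: (mr a) => P hP <-.
case: (tn P hP) => P1 [P2 [n1 n2 ne]].
have edge : forall P', neighbour D (in_TCC D P) P' -> Edgeb (top P) (top P').
  move=> P' [hP' nt [Q tq aQ]].
  case: (tcc_top hP tq) => hQ eQ.
  have nt' : top P' != top P.
    by apply/eqP => e; apply: nt; apply: (tcc_ext hP tq hP' aQ e).
  apply/EdgeP; split; first by rewrite eq_sym.
  by exists Q, P'.
by exists (top P1), (top P2); split => //; apply: edge.
Qed.

End DGraph.

Lemma main1 (A : finType) (HA : 2 < #|A|) (D : {set pref A}) f
  (mr : minimally_rich D) (ctn : connected_two_neighbours D)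
  (Hun : unanimous D f) (Hsp : strategy_proof D f) X0 X0' :
  X0 \in D -> X0' \in D -> adjacent X0 X0' -> top X0 != top X0' -> f X0 X0' = top X0 ->
  forall P1 P2, P1 \in D -> P2 \in D -> f P1 P2 = top P1.
Proof.
move=> hX0 hX0' a0 n0 f0 P1 P2 h1 h2.
pose E := Edgeb D.
pose W1 := fun x y => exists X X', X \in D /\ X' \in D /\ adjacent X X' /\
  top X != top X' /\ top X = x /\ top X' = y /\ f X X' = x.
pose R2 := fun z => exists Y, Y \in D /\ f Y P2 = z.
have Wedge : forall x y, W1 x y -> E x y.
  move=> x y [X [X' [hX [hX' [aX [nX [<- [<- _]]]]]]]].
  by apply/EdgeP; split => //; exists X, X'.
have Wsnake : forall a c b, W1 a c -> E c b -> b != a -> W1 c b.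
  move=> a c b [Q [Q' [hQ [hQ' [aQ [nQ [eQ [eQ' fQ]]]]]]]] /EdgeP [ncb [T' [T [hT' hT aT eT' eT]]]] nba.
  have nT : top T' != top T by rewrite eT' eT.
  have e1 : top T' = top Q' by rewrite eT' eQ'.
  have e2 : top T != top Q by rewrite eT eQ.
  have fQ2 : f Q Q' = top Q by rewrite eQ.
  have fT : f T' T = top T' := snake HA Hun Hsp hQ hQ' hT' hT aQ nQ fQ2 aT nT e1 e2.
  exists T', T; do 6 (split; first by []).
  by rewrite fT eT'.
have Wbound : forall x y, W1 x y -> R2 y -> R2 x.
  move=> x y [X [X' [hX [hX' [aX [nX [<- [<- fX]]]]]]]] [Y [hY fY]].
  exists X; split => //.
  exact: (boundary HA Hsp hX hX' aX nX fX h2 hY fY).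
have Euv : E (top X0, top X0').1 (top X0, top X0').2.
  by apply/EdgeP; split => //; exists X0, X0'.
have Esym' : forall x y, E x y -> E y x by move=> x y; apply: Edge_sym.
have Econn' := Econn mr ctn.1.
have Edeg' := Edeg mr ctn.
have W0 : W1 (top X0) (top X0') by exists X0, X0'.
have Wall : forall e, connect (nbstep E) (top X0, top X0') e -> W1 e.1 e.2.
  apply: (@reach_ind _ E _ (fun e => W1 e.1 e.2)) => // e e' _ We /and3P [/eqP e21 Ee' ne'].
  apply: (Wsnake e.1) => //; by rewrite -e21.
have [e1 [c1 t1]] := nb_reach Esym' Econn' Edeg' Euv (top P1).
have We1 := Wall e1 c1.
have [e2 [c2 t2]] := nb_reach Esym' Econn' Edeg' (Wedge _ _ We1) (top P2).
have chain : forall e, connect (nbstep E) e1 e -> R2 e.2 -> R2 e1.2.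
  apply: (@reach_ind _ E _ (fun e => R2 e.2 -> R2 e1.2)) => // e e' ce IH s Re'.
  apply: IH; have s' := s; move: s' => /and3P [/eqP e21 _ _]; rewrite e21.
  apply: (Wbound _ _ (Wall e' _) Re').
  exact: connect_trans c1 (connect_trans ce (connect1 s)).
have : R2 e1.2 by apply: (chain e2 c2); rewrite t2; exists P2; split => //; exact: Hun.
rewrite t1 => -[Y [hY fY]].
apply: (top_bestN HA); rewrite -fY; exact: Hsp.1.
Qed.

Theorem proposition2 (A : finType) (D : {set pref A}) (f : pref A -> pref A -> A) :
  2 < #|A| ->
  minimally_rich D ->
  connected_two_neighbours D ->
  unanimous D f ->
  strategy_proof D f ->
  dictatorship D f.
Proof.
move=> HA mr ctn Hun Hsp.
have [a _] : exists a : A, a \in A.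
  by apply/card_gt0P; apply: leq_trans HA.
case: (Edeg mr ctn a) => c1 [c2 [_ /EdgeP [nac [X [X' [hX hX' aX eX eX']]]] _]].
have nX : top X != top X' by rewrite eX eX'.
case: (edge_out HA Hun Hsp hX hX' aX nX) => fe.
  by left; apply: (main1 HA mr ctn Hun Hsp hX hX' aX nX fe).
right => P1 P2 h1 h2.
have nX' : top X' != top X by rewrite eq_sym.
exact: (main1 HA mr ctn (unan_T Hun) (sp_T Hsp) hX' hX (adjacent_sym aX) nX' fe h2 h1).
Qed.
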